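(* Let $F\colon\mathbf{PBoolean}^{\mathrm{op}}\to\mathbf{Loc}$ be any functor whose restriction to boolean algebras is naturally isomorphic to the Stone spectrum functor $B\mapsto\mathrm{Idl}(B)$. Then $F(\mathrm{Proj}(M_n(\mathbb{C})))$ is the trivial locale for every $n\ge 3$.
   Context: A partial boolean algebra is a set $A$ with a reflexive symmetric relation $\odot$ (commeasurability), elements $0,1$ commeasurable with everything, a total unary operation $\neg$, and binary operations $\wedge,\vee$ defined on commeasurable pairs, such that every set of pairwise commeasurable elements is contained in a set of pairwise commeasurable elements which is closed under the operations and forms a boolean algebra under them. $\mathbf{PBoolean}$ is the category of partial boolean algebras with maps preserving commeasurability and the (partial) operations. Boolean algebras are the partial boolean algebras in which all pairs are commeasurable. $\mathrm{Proj}(M_n(\mathbb{C}))$ is the partial boolean algebra of projections $p=p^*=p^2$ in the $n\times n$ complex matrices, with $p\odot q$ iff $pq=qp$, $\neg p=1-p$, $p\wedge q=pq$, $p\vee q=p+q-pq$. The Stone spectrum of a boolean algebra $B$ is the locale whose frame is the frame $\mathrm{Idl}(B)$ of ideals of $B$. $\mathbf{Loc}$ is the category of locales; a locale is trivial if its frame satisfies $0=1$. *)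

(* Defs.v *)
From mathcomp Require Import all_boot all_order all_algebra.
From mathcomp Require Import complex.
From mathcomp Require Import Rstruct.
Set Implicit Arguments.
Unset Strict Implicit.
Unset Printing Implicit Defensive.
Import Order.TTheory GRing.Theory Num.Theory.

(* Partial boolean algebras.  The binary operations are total functions, but *)
(* only their values on commeasurable pairs matter (morphisms are only       *)
(* required to preserve them there, and the axiom only mentions them there). *)

Record PBAData := {
  pcar :> Type;
  pcomm : pcar -> pcar -> Prop;
  pzero : pcar;
  pone : pcar;
  pneg : pcar -> pcar;
  pmeet : pcar -> pcar -> pcar;
  pjoin : pcar -> pcar -> pcar }.
Arguments pcomm : clear implicits.
Arguments pneg : clear implicits.
Arguments pmeet : clear implicits.
Arguments pjoin : clear implicits.

Definition boolean_subalgebra (A : PBAData) (T : A -> Prop) : Prop :=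
  (forall x y, T x -> T y -> pcomm A x y) /\
  T (pzero A) /\ T (pone A) /\
  (forall x, T x -> T (pneg A x)) /\
  (forall x y, T x -> T y -> T (pmeet A x y)) /\
  (forall x y, T x -> T y -> T (pjoin A x y)) /\
  (forall x y z, T x -> T y -> T z ->
     pmeet A x y = pmeet A y x /\ pjoin A x y = pjoin A y x /\
     pmeet A x (pmeet A y z) = pmeet A (pmeet A x y) z /\
     pjoin A x (pjoin A y z) = pjoin A (pjoin A x y) z /\
     pmeet A x (pjoin A x y) = x /\
     pjoin A x (pmeet A x y) = x /\
     pmeet A x (pjoin A y z) = pjoin A (pmeet A x y) (pmeet A x z)) /\
  (forall x, T x ->
     pmeet A x (pone A) = x /\ pjoin A x (pzero A) = x /\
     pmeet A x (pneg A x) = pzero A /\ pjoin A x (pneg A x) = pone A).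

Definition pba_axiom (A : PBAData) : Prop :=
  (forall x, pcomm A x x) /\
  (forall x y, pcomm A x y -> pcomm A y x) /\
  (forall x, pcomm A (pzero A) x /\ pcomm A (pone A) x) /\
  (forall S : A -> Prop, (forall x y, S x -> S y -> pcomm A x y) ->
     exists T : A -> Prop, (forall x, S x -> T x) /\ boolean_subalgebra T).

Record PBA := { pdata :> PBAData; pba_ax : pba_axiom pdata }.

Record pba_hom (A B : PBA) := {
  hfun :> A -> B;
  hom_comm : forall x y, pcomm A x y -> pcomm B (hfun x) (hfun y);
  hom_zero : hfun (pzero A) = pzero B;
  hom_one : hfun (pone A) = pone B;
  hom_neg : forall x, hfun (pneg A x) = pneg B (hfun x);
  hom_meet : forall x y, pcomm A x y ->
     hfun (pmeet A x y) = pmeet B (hfun x) (hfun y);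
  hom_join : forall x y, pcomm A x y ->
     hfun (pjoin A x y) = pjoin B (hfun x) (hfun y) }.

Definition id_hom (A : PBA) : pba_hom A A.
Proof. by exists (fun x => x). Defined.

Definition comp_hom (A B C : PBA) (g : pba_hom B C) (f : pba_hom A B) :
  pba_hom A C.
Proof.
exists (fun x => g (f x)).
- by move=> x y h; do 2 apply: hom_comm.
- by rewrite !hom_zero.
- by rewrite !hom_one.
- by move=> x; rewrite !hom_neg.
- by move=> x y h; rewrite hom_meet // hom_meet //; apply: hom_comm.
- by move=> x y h; rewrite hom_join // hom_join //; apply: hom_comm.
Defined.

Definition is_boolean (A : PBA) : Prop := forall x y : A, pcomm A x y.

(* Frames (= locales; Loc is the opposite of the category of frames).       *)

Record Frame := {
  fcar :> Type;
  fle : fcar -> fcar -> Prop;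
  ftop : fcar;
  fmeet : fcar -> fcar -> fcar;
  fsup : (fcar -> Prop) -> fcar;
  fle_refl : forall a, fle a a;
  fle_trans : forall a b c, fle a b -> fle b c -> fle a c;
  fle_anti : forall a b, fle a b -> fle b a -> a = b;
  ftop_max : forall a, fle a ftop;
  fmeet_glb : forall a b c, fle c (fmeet a b) <-> (fle c a /\ fle c b);
  fsup_lub : forall (S : fcar -> Prop) c,
     fle (fsup S) c <-> (forall s, S s -> fle s c);
  fdistr : forall a (S : fcar -> Prop),
     fmeet a (fsup S) = fsup (fun y => exists2 s, S s & y = fmeet a s) }.

Definition fbot (L : Frame) : L := fsup (fun _ : L => False).

Definition trivial_locale (L : Frame) : Prop := fbot L = ftop L.

Definition frame_hom (L M : Frame) (h : L -> M) : Prop :=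
  h (ftop L) = ftop M /\
  (forall a b, h (fmeet a b) = fmeet (h a) (h b)) /\
  (forall S : L -> Prop, h (fsup S) = fsup (fun y => exists2 s, S s & y = h s)).

(* A functor F : PBoolean^op -> Loc, presented (equivalently) as a covariant
   functor PBoolean -> Frm: a PBA map f : A -> B gives the locale map
   F B -> F A, i.e. the frame homomorphism Fmap f : F A -> F B. *)
Record PBA_Loc_functor := {
  Fob : PBA -> Frame;
  Fmap : forall (A B : PBA), pba_hom A B -> Fob A -> Fob B;
  Fmap_frame_hom : forall A B (f : pba_hom A B), frame_hom (Fmap f);
  Fmap_id : forall A (x : Fob A), Fmap (id_hom A) x = x;
  Fmap_comp : forall A B C (f : pba_hom A B) (g : pba_hom B C) (x : Fob A),
     Fmap (comp_hom g f) x = Fmap g (Fmap f (x)) }.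

(* The Stone spectrum: the frame Idl(B) of ideals of a boolean algebra B.   *)
(* Ideals are represented as predicates on B; the frame operations of       *)
(* Idl(B) are: top = B, binary meet = intersection, join of a family =     *)
(* ideal generated by the union.                                            *)

Definition ple (A : PBAData) (x y : A) : Prop := pmeet A x y = x.

Definition is_ideal (A : PBAData) (I : A -> Prop) : Prop :=
  I (pzero A) /\
  (forall x y, I y -> ple x y -> I x) /\
  (forall x y, I x -> I y -> I (pjoin A x y)).

Definition idl_top (A : PBAData) : A -> Prop := fun _ => True.
Definition idl_meet (A : PBAData) (I J : A -> Prop) : A -> Prop :=
  fun x => I x /\ J x.
Definition idl_sup (A : PBAData) (S : (A -> Prop) -> Prop) : A -> Prop :=
  fun x => exists l : seq A, (forall y, List.In y l -> exists2 I, S I & I y)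
                            /\ ple x (foldr (pjoin A) (pzero A) l).

(* Stone functor on morphisms: I |-> ideal generated by f[I]
   (the down-closure of the image). *)
Definition idl_image (A B : PBA) (f : pba_hom A B) (I : A -> Prop) : B -> Prop :=
  fun y => exists2 x, I x & ple y (f x).

(* eta : Idl(A) -> L is a frame isomorphism (eta is only considered on
   ideals). *)
Definition idl_frame_iso (A : PBA) (L : Frame) (eta : (A -> Prop) -> L) : Prop :=
  eta (@idl_top A) = ftop L /\
  (forall I J, is_ideal I -> is_ideal J -> eta (idl_meet I J) = fmeet (eta I) (eta J)) /\
  (forall S : (A -> Prop) -> Prop, (forall I, S I -> is_ideal I) ->
     eta (idl_sup S) = fsup (fun y => exists2 I, S I & y = eta I)) /\
  (forall I J, is_ideal I -> is_ideal J -> eta I = eta J -> I = J) /\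
  (forall y : L, exists2 I, is_ideal I & eta I = y).

Definition Cplx := (Rdefinitions.R)[i].

Local Open Scope ring_scope.

Definition adjmx n (p : 'M[Cplx]_n) : 'M[Cplx]_n := map_mx Num.conj (p^T).

Definition is_proj n (p : 'M[Cplx]_n) : bool := (adjmx p == p) && (p *m p == p).

Definition proj n := {p : 'M[Cplx]_n | is_proj p}.

Lemma is_proj0 n : is_proj (0 : 'M[Cplx]_n).
Proof.
rewrite /is_proj /adjmx mul0mx eqxx andbT; apply/eqP/matrixP => i j.
by rewrite !mxE conjC0.
Qed.

Definition proj0 n : proj n := exist _ 0 (is_proj0 n).

Definition ProjData (n : nat) : PBAData := {|
  pcar := proj n;
  pcomm := fun p q => val p *m val q = val q *m val p;
  pzero := proj0 n;
  pone := insubd (proj0 n) (1%:M);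
  pneg := fun p => insubd (proj0 n) (1%:M - val p);
  pmeet := fun p q => insubd (proj0 n) (val p *m val q);
  pjoin := fun p q => insubd (proj0 n) (val p + val q - val p *m val q) |}.

(* Main.v *)
Require Import Defs.
From mathcomp Require Import all_boot all_order all_algebra.

From mathcomp Require Import all_boot all_order all_algebra.
From Stdlib Require Import FunctionalExtensionality PropExtensionality ProofIrrelevance.
Set Implicit Arguments.
Unset Strict Implicit.
Unset Printing Implicit Defensive.

Section FrameLemmas.
Variable L : Frame.
Implicit Types a b c : L.

Lemma fle_meetl a b : fle (fmeet a b) a.
Proof. by have /(fmeet_glb a b) [] := fle_refl (fmeet a b). Qed.
Lemma fle_meetr a b : fle (fmeet a b) b.
Proof. by have /(fmeet_glb a b) [] := fle_refl (fmeet a b). Qed.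
Lemma fle_meet a b c : fle c a -> fle c b -> fle c (fmeet a b).
Proof. by move=> h1 h2; apply/fmeet_glb. Qed.
Lemma fsup_ub (S : L -> Prop) s : S s -> fle s (fsup S).
Proof. by move=> hs; have /(fsup_lub S (fsup S)) := fle_refl (fsup S); apply. Qed.
Lemma fsup_le (S : L -> Prop) c : (forall s, S s -> fle s c) -> fle (fsup S) c.
Proof. by move=> h; apply/fsup_lub. Qed.
Lemma fbot_le c : fle (fbot L) c.
Proof. by apply: fsup_le. Qed.
Lemma fmeet_eq a b : fle a b -> fmeet a b = a.
Proof.
move=> h; apply: fle_anti; first exact: fle_meetl.
by apply: fle_meet => //; apply: fle_refl.
Qed.
Lemma fmeetC a b : fmeet a b = fmeet b a.
Proof. by apply: fle_anti; apply: fle_meet; (apply: fle_meetr || apply: fle_meetl). Qed.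
Lemma fle_meet2 a b c d : fle a c -> fle b d -> fle (fmeet a b) (fmeet c d).
Proof.
move=> h1 h2; apply: fle_meet.
  exact: fle_trans (fle_meetl _ _) h1.
exact: fle_trans (fle_meetr _ _) h2.
Qed.
End FrameLemmas.

Section FrameHom.
Variables (L M : Frame) (h : L -> M) (hh : frame_hom h).

Lemma fh_meet a b : h (fmeet a b) = fmeet (h a) (h b).
Proof. by case: hh => _ []. Qed.
Lemma fh_top : h (ftop L) = ftop M.
Proof. by case: hh. Qed.
Lemma fh_sup S : h (fsup S) = fsup (fun y => exists2 s, S s & y = h s).
Proof. by case: hh => _ [] _ ->. Qed.
Lemma fh_le a b : fle a b -> fle (h a) (h b).
Proof.
move=> /fmeet_eq <-; rewrite fh_meet; exact: fle_meetr.
Qed.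
Lemma fh_bot : h (fbot L) = fbot M.
Proof.
rewrite /fbot fh_sup; apply: fle_anti; last exact: fbot_le.
by apply: fsup_le => s [].
Qed.
End FrameHom.

From mathcomp Require Import all_boot all_order all_algebra.
From Stdlib Require Import FunctionalExtensionality PropExtensionality ProofIrrelevance.
Set Implicit Arguments.
Unset Strict Implicit.
Unset Printing Implicit Defensive.

Definition BData (k : nat) : PBAData := {|
  pcar := {set 'I_k};
  pcomm := fun _ _ => True;
  pzero := set0;
  pone := setT;
  pneg := fun x => ~: x;
  pmeet := fun x y => x :&: y;
  pjoin := fun x y => x :|: y |}.

Lemma B_ax k : pba_axiom (BData k).
Proof.
do 3!split => //.
move=> S _; exists (fun _ => True); split => //.
do 7!split => //.
  move=> x y z _ _ _ /=; split; first exact: setIC.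
  split; first exact: setUC. split; first exact: setIA. split; first exact: setUA.
  split; first by rewrite [x :|: y]setUC setKU.
  split; first by rewrite [x :&: y]setIC setKI.
  exact: setIUr.
by move=> x _ /=; rewrite setIT setU0 setICr setUCr.
Qed.

Definition BB k : PBA := {| pdata := BData k; pba_ax := B_ax k |}.

Lemma BB_bool k : is_boolean (BB k).
Proof. by []. Qed.

Definition down k (S : {set 'I_k}) : BB k -> Prop := fun X => X \subset S.

Lemma ple_B k (X Y : BB k) : ple X Y <-> X \subset Y.
Proof. by rewrite /ple /=; split => [<-|/setIidPl]; [apply: subsetIr|]. Qed.

Lemma down_ideal k S : is_ideal (@down k S).
Proof.
rewrite /is_ideal /down /=; split; first exact: sub0set.
split; first by move=> x y hy /ple_B hxy; apply: subset_trans hxy hy.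
by move=> x y hx hy; rewrite subUset hx hy.
Qed.

Lemma pred_ext (T : Type) (P Q : T -> Prop) : (forall x, P x <-> Q x) -> P = Q.
Proof. by move=> h; apply: functional_extensionality => x; apply: propositional_extensionality. Qed.

Lemma down_meet k S T : idl_meet (@down k S) (down T) = down (S :&: T).
Proof. by apply: pred_ext => x; rewrite /idl_meet /down subsetI; split => [[-> ->]|/andP]. Qed.

Lemma down0 k : @down k set0 = idl_sup (fun _ => False).
Proof.
apply: pred_ext => x; rewrite /down /idl_sup; split.
  by move=> h; exists [::]; split => //; apply/ple_B.
move=> [[|y l] [hl /ple_B hx]] //.
by have [I []] := hl y (or_introl erefl).
Qed.

Lemma foldr_set1 k (s : seq 'I_k) :
  foldr (pjoin (BB k)) (pzero (BB k)) (map (fun i => [set i]) s) = [set x in s].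
Proof.
elim: s => [|i s IH] /=; first by apply/setP => x; rewrite !inE.
by rewrite IH; apply/setP => x; rewrite !inE.
Qed.

Lemma downT k : @idl_top (BB k) = idl_sup (fun I => exists i, I = @down k [set i]).
Proof.
apply: pred_ext => x; split => // _.
exists (map (fun i => [set i]) (enum 'I_k)); split.
  move=> y /List.in_map_iff [i [<- _]].
  by exists (down [set i]); [exists i | apply: subxx].
apply/ple_B; rewrite foldr_set1; apply/subsetP => i _; rewrite inE mem_enum //.
Qed.


From mathcomp Require Import all_boot all_order all_algebra.
From Stdlib Require Import FunctionalExtensionality PropExtensionality ProofIrrelevance.
Unset Implicit Arguments.
Unset Strict Implicit.
Unset Printing Implicit Defensive.

Section Ctx.
Variables (F : PBA_Loc_functor) (eta : forall A : PBA, (A -> Prop) -> @Fob F A).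
Hypothesis hiso : forall A : PBA, is_boolean A -> idl_frame_iso (eta A).
Hypothesis hnat : forall (A B : PBA) (f : pba_hom A B), is_boolean A -> is_boolean B ->
     forall I : A -> Prop, is_ideal I ->
       @Fmap F A B f (eta A I) = eta B (idl_image f I).

Section OneK.
Variable k : nat.
Let iso := hiso (BB k) (@BB_bool k).

Definition ED (S : {set 'I_k}) := eta (BB k) (down S).

Lemma ED_meet (S T : {set 'I_k}) : fmeet (ED S) (ED T) = ED (S :&: T).
Proof. by case: iso => _ [h _]; rewrite /ED -h ?down_meet //; apply: down_ideal. Qed.

Lemma ED_le (S T : {set 'I_k}) : S \subset T -> fle (ED S) (ED T).
Proof. by move=> /setIidPl h; rewrite -h -ED_meet; apply: fle_meetr. Qed.

Lemma ED0 : ED set0 = fbot _.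
Proof.
case: iso => _ [_ [h _]]; rewrite /ED down0 h //; apply: fle_anti; last exact: fbot_le.
by apply: fsup_le => s [I].
Qed.

Lemma ED_cover : fle (ftop _) (fsup (fun y => exists i, y = ED [set i])).
Proof.
case: iso => ht [_ [h _]]; rewrite -ht downT h.
  by apply: fsup_le => s [I [i ->] ->]; apply: fsup_ub; exists i.
by move=> I [i ->]; apply: down_ideal.
Qed.

Lemma ED_T : ED setT = ftop _.
Proof.
case: iso => ht _; rewrite /ED -ht; congr eta; apply: pred_ext => x.
by rewrite /down subsetT.
Qed.

Variables (A : PBA) (h : pba_hom (BB k) A).
Definition U S := Fmap h (ED S).
Let fh := Fmap_frame_hom F h.

Lemma U_meet (S T : {set 'I_k}) : fmeet (U S) (U T) = U (S :&: T).
Proof. by rewrite /U -fh_meet // ED_meet. Qed.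
Lemma U_le (S T : {set 'I_k}) : S \subset T -> fle (U S) (U T).
Proof. by move=> hs; apply: fh_le => //; apply: ED_le. Qed.
Lemma U0 : U set0 = fbot _.
Proof. by rewrite /U ED0 fh_bot. Qed.
Lemma U_T : U setT = ftop _.
Proof. by rewrite /U ED_T fh_top. Qed.
Lemma U_cover : fle (ftop _) (fsup (fun y => exists i, y = U [set i])).
Proof.
rewrite -(fh_top fh); apply: fle_trans (fh_le fh ED_cover) _.
rewrite fh_sup //; apply: fsup_le => s [y [i ->] ->]; apply: fsup_ub; by exists i.
Qed.
End OneK.

Lemma B_mono k m (g : pba_hom (BB k) (BB m)) (x y : {set 'I_k}) : x \subset y -> g x \subset g y.
Proof.
move=> /setIidPl hxy; apply/setIidPl.
by rewrite -[X in _ = g X]hxy (hom_meet g (x := x) (y := y) I).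
Qed.

Lemma ED_nat k m (g : pba_hom (BB k) (BB m)) (X : {set 'I_k}) :
  Fmap g (ED k X) = ED m (g X).
Proof.
rewrite /ED hnat //; last exact: down_ideal.
congr eta; apply: pred_ext => y; rewrite /idl_image /down; split.
  move=> [x hx hy]; have h1 := B_mono _ _ g _ _ hx; have h2 := proj1 (ple_B _ _) hy; exact: subset_trans h2 h1.
by move=> hy; exists X => //; apply/ple_B.
Qed.
End Ctx.

From mathcomp Require Import all_boot all_order all_algebra complex Rstruct.
From Stdlib Require Import FunctionalExtensionality PropExtensionality ProofIrrelevance.
Set Implicit Arguments.
Unset Strict Implicit.
Unset Printing Implicit Defensive.
Import Order.TTheory GRing.Theory Num.Theory.
Local Open Scope ring_scope.
Local Notation C := (Rdefinitions.R)[i].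

Section Adj.
Variable n : nat.
Implicit Types p q : 'M[C]_n.
Lemma hadjD p q : adjmx (p + q) = adjmx p + adjmx q.
Proof. by apply/matrixP => i j; rewrite !mxE rmorphD. Qed.
Lemma hadjN p : adjmx (- p) = - adjmx p.
Proof. by apply/matrixP => i j; rewrite !mxE rmorphN. Qed.
Lemma hadjB p q : adjmx (p - q) = adjmx p - adjmx q.
Proof. by rewrite hadjD hadjN. Qed.
Lemma hadjM p q : adjmx (p *m q) = adjmx q *m adjmx p.
Proof. by rewrite /adjmx trmx_mul map_mxM. Qed.
Lemma hadj1 : adjmx (1%:M : 'M[C]_n) = 1%:M.
Proof. by apply/matrixP => i j; rewrite !mxE conjC_nat eq_sym. Qed.
Lemma hadj0 : adjmx (0 : 'M[C]_n) = 0.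
Proof. by apply/matrixP => i j; rewrite !mxE rmorph0. Qed.
Lemma hadj_sum (I : finType) (P : pred I) (f : I -> 'M[C]_n) :
  adjmx (\sum_(i | P i) f i) = \sum_(i | P i) adjmx (f i).
Proof.
elim/big_rec2: _ => [|i x y _ <-]; first exact: hadj0.
by rewrite hadjD.
Qed.
End Adj.

Lemma is_projP n (p : 'M[C]_n) : is_proj p = (adjmx p == p) && (p *m p == p).
Proof. by []. Qed.

Section Context.
Variables (n : nat) (H : pba_axiom (ProjData n)).
Definition PP : PBA := {| pdata := ProjData n; pba_ax := H |}.

Lemma val_ins (x : 'M[C]_n) : is_proj x -> val (insubd (proj0 n) x : proj n) = x.
Proof. by move=> hx; rewrite val_insubd hx. Qed.

Lemma proj1mx : is_proj (1%:M : 'M[C]_n).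
Proof. by rewrite is_projP hadj1 mul1mx !eqxx. Qed.

Variables (k : nat) (q : 'I_k -> proj n).
Hypothesis horth : forall i j, i != j -> val (q i) *m val (q j) = 0.
Hypothesis hsum : \sum_i val (q i) = 1%:M.

Definition ps (S : {set 'I_k}) : 'M[C]_n := \sum_(i in S) val (q i).

Lemma projE (p : proj n) : adjmx (val p) = val p /\ val p *m val p = val p.
Proof. by case/andP: (valP p) => /eqP -> /eqP ->. Qed.

Lemma inner i (T : {set 'I_k}) :
  \sum_(j in T) val (q i) *m val (q j) = if i \in T then val (q i) else 0.
Proof.
case: ifP => hi.
  rewrite (big_setD1 i) //= big1 ?addr0; first by case: (projE (q i)).
  by move=> j; rewrite !inE => /andP[hji _]; rewrite horth // eq_sym.
by rewrite big1 // => j hj; rewrite horth //; apply: contraFN hi => /eqP ->.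
Qed.

Lemma psM S T : ps S *m ps T = ps (S :&: T).
Proof.
rewrite /ps mulmx_suml (eq_bigr (fun i => if i \in T then val (q i) else 0)); last first.
  by move=> i _; rewrite mulmx_sumr inner.
rewrite (big_setID T) /= [X in _ + X]big1; last first.
  by move=> i; rewrite !inE => /andP[/negbTE -> _].
by rewrite addr0; apply: eq_bigr => i; rewrite inE => /andP[_ ->].
Qed.

Lemma psT : ps setT = 1%:M.
Proof. by rewrite -hsum /ps; apply: eq_bigl => i; rewrite inE. Qed.

Lemma ps0 : ps set0 = 0.
Proof. by rewrite /ps big_set0. Qed.

Lemma ps1 i : ps [set i] = val (q i).
Proof. by rewrite /ps big_set1. Qed.

Lemma psC S : ps (~: S) = 1%:M - ps S.
Proof.
by rewrite -psT /ps [in RHS](big_setID S) /= setTI setTD addrC addrK.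
Qed.

Lemma psU S T : ps (S :|: T) = ps S + ps T - ps (S :&: T).
Proof.
rewrite /ps (big_setID S) /= setIUl setIid setDUl setDv set0U.
rewrite [X in _ = _ + X - _](big_setID S) /= [T :&: S]setIC.
rewrite [S :|: _](_ : _ = S); last by rewrite setIC setKI.
by rewrite addrCA addrAC subrr add0r.
Qed.

Lemma ps_proj S : is_proj (ps S).
Proof.
rewrite is_projP psM setIid eqxx andbT /ps hadj_sum.
by apply/eqP; apply: eq_bigr => i _; case: (projE (q i)).
Qed.

Definition hf (S : {set 'I_k}) : proj n := insubd (proj0 n) (ps S).
Lemma hfE S : val (hf S) = ps S.
Proof. exact: val_ins (ps_proj S). Qed.

Definition ctx_hom : pba_hom (BB k) PP.
Proof.
exists hf.
- by move=> S T _ /=; rewrite !hfE !psM setIC.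
- by apply: val_inj; rewrite /= hfE ps0.
- by apply: val_inj; rewrite /= hfE psT val_ins // proj1mx.
- by move=> S; apply: val_inj; rewrite /= !hfE -psC val_ins ?ps_proj // hfE.
- by move=> S T _; apply: val_inj; rewrite /= !hfE psM val_ins ?ps_proj // hfE.
- by move=> S T _; apply: val_inj; rewrite /= !hfE psM -psU val_ins ?ps_proj.
Defined.

Lemma ctx_homE S : ctx_hom S = hf S.
Proof. by []. Qed.
End Context.

From mathcomp Require Import all_boot all_order all_algebra complex Rstruct.
From Stdlib Require Import FunctionalExtensionality PropExtensionality ProofIrrelevance.
Set Implicit Arguments.
Unset Strict Implicit.
Unset Printing Implicit Defensive.
Import Order.TTheory GRing.Theory Num.Theory.
Local Open Scope ring_scope.

Section Ext.
Variables (n k : nat) (a : 'I_k -> proj n).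
Hypothesis horth : forall i j, i != j -> val (a i) *m val (a j) = 0.

Definition sa := \sum_i val (a i).

Lemma sa_proj : is_proj sa.
Proof. by have := ps_proj horth setT; rewrite /ps (eq_bigl xpredT) // => i; rewrite inE. Qed.

Definition rest : proj n := insubd (proj0 n) (1%:M - sa).

Lemma rest_proj : is_proj (1%:M - sa).
Proof.
case/andP: sa_proj => /eqP h1 /eqP h2.
rewrite is_projP hadjB hadj1 h1 eqxx /= mulmxBl !mulmxBr !mul1mx !mulmx1 h2 subrr subr0.
exact: eqxx.
Qed.

Lemma restE : val rest = 1%:M - sa.
Proof. exact: val_ins rest_proj. Qed.

Lemma sa_mulr i : sa *m val (a i) = val (a i).
Proof.
rewrite /sa mulmx_suml (bigD1 i) //= big1 ?addr0; first by case: (projE (a i)).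
by move=> j hj; rewrite horth.
Qed.
Lemma sa_mull i : val (a i) *m sa = val (a i).
Proof.
rewrite /sa mulmx_sumr (bigD1 i) //= big1 ?addr0; first by case: (projE (a i)).
by move=> j hj; rewrite horth // eq_sym.
Qed.

Definition ext (i : 'I_k.+1) : proj n :=
  if unlift ord_max i is Some j then a j else rest.

Lemma ext_orth i j : i != j -> val (ext i) *m val (ext j) = 0.
Proof.
rewrite /ext; case: unliftP => [i' ->|->]; case: unliftP => [j' ->|->] //.
- by move=> h; apply: horth; apply: contraNneq h => ->.
- by move=> _; rewrite restE mulmxBr mulmx1 sa_mull subrr.
- by move=> _; rewrite restE mulmxBl mul1mx sa_mulr subrr.
- by rewrite eqxx.
Qed.

Lemma ext_sum : \sum_i val (ext i) = 1%:M.
Proof.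
rewrite big_ord_recr /= /ext unlift_none restE.
rewrite (eq_bigr (fun i => val (a i))) -/sa ?subrKA //.
  by rewrite addrC subrK.
move=> i _; rewrite (_ : widen_ord _ i = lift ord_max i) ?liftK //.
by apply: val_inj; rewrite /= /bump leqNgt ltn_ord.
Qed.
End Ext.

From mathcomp Require Import all_boot all_order all_algebra complex Rstruct.
From Stdlib Require Import FunctionalExtensionality PropExtensionality ProofIrrelevance.
Unset Implicit Arguments.
Unset Strict Implicit.
Unset Printing Implicit Defensive.
Import Order.TTheory GRing.Theory Num.Theory.
Local Open Scope ring_scope.

Lemma hom_ext (A B : PBA) (f g : pba_hom A B) : (forall x, f x = g x) -> f = g.
Proof.
case: f => f1 f2 f3 f4 f5 f6 f7; case: g => g1 g2 g3 g4 g5 g6 g7 /= h.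
have e : f1 = g1 by apply: functional_extensionality.
subst g1; f_equal; apply: proof_irrelevance.
Qed.

Definition i1 : 'I_2 := @Ordinal 2 1 isT.

Lemma set2_cases (T : {set 'I_2}) :
  T = set0 \/ T = [set ord0] \/ T = [set i1] \/ T = setT.
Proof.
have hi : forall i : 'I_2, i = ord0 \/ i = i1.
  by case=> [[|[|m]] hm] //; [left|right]; apply: val_inj.
case h0: (ord0 \in T); case h1: (i1 \in T).
- right; right; right; apply/setP => i; rewrite inE; by case: (hi i) => ->.
- right; left; apply/setP => i; rewrite inE; by case: (hi i) => ->.
- right; right; left; apply/setP => i; rewrite inE; by case: (hi i) => ->.
- left; apply/setP => i; rewrite inE; by case: (hi i) => ->.
Qed.

Section GHom.
Variables (k : nat) (S : {set 'I_k}).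
Definition gf (T : {set 'I_2}) : {set 'I_k} :=
  [set i | ((i \in S) && (ord0 \in T)) || ((i \notin S) && (i1 \in T))].
Definition ghom : pba_hom (BB 2) (BB k).
Proof.
exists gf => //.
- by rewrite /gf /=; apply/setP => x; rewrite !inE; case: (x \in S).
- by rewrite /gf /=; apply/setP => x; rewrite !inE; case: (x \in S).
- move=> T; rewrite /gf /=; apply/setP => x; rewrite !inE /=.
  by case: (x \in S); case: (ord0 \in T); case: (i1 \in T).
- move=> T T' _; rewrite /gf /=; apply/setP => x; rewrite !inE /=.
  by case: (x \in S); case: (ord0 \in T); case: (i1 \in T); case: (ord0 \in T'); case: (i1 \in T').
- move=> T T' _; rewrite /gf /=; apply/setP => x; rewrite !inE /=.
  by case: (x \in S); case: (ord0 \in T); case: (i1 \in T); case: (ord0 \in T'); case: (i1 \in T').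
Defined.
Lemma ghom0 : ghom [set ord0] = S.
Proof. by rewrite /= /gf; apply/setP => x; rewrite !inE /= ?inE; case: (x \in S). Qed.
End GHom.

Section U.
Variables (F : PBA_Loc_functor) (eta : forall A : PBA, (A -> Prop) -> @Fob F A).
Hypothesis hiso : forall A : PBA, is_boolean A -> idl_frame_iso (eta A).
Hypothesis hnat : forall (A B : PBA) (f : pba_hom A B), is_boolean A -> is_boolean B ->
     forall I : A -> Prop, is_ideal I ->
       @Fmap F A B f (eta A I) = eta B (idl_image f I).
Variables (n : nat) (H : pba_axiom (ProjData n)).

Definition single (p : proj n) : 'I_1 -> proj n := fun _ => p.
Lemma single_orth p : forall i j : 'I_1, i != j -> val (single p i) *m val (single p j) = 0.
Proof. by move=> [[|?] ?] [[|?] ?]. Qed.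
Definition q2 (p : proj n) := ext (single p).
Definition ctx2 (p : proj n) : pba_hom (BB 2) (PP H) :=
  ctx_hom H (ext_orth (single_orth p)) (ext_sum (single_orth p)).

Definition u (p : proj n) : Fob F (PP H) := U F eta 2 (PP H) (ctx2 p) [set ord0].

Section Gen.
Variables (k : nat) (q : 'I_k -> proj n).
Hypothesis horth : forall i j, i != j -> val (q i) *m val (q j) = 0.
Hypothesis hsum : \sum_i val (q i) = 1%:M.
Let h := ctx_hom H horth hsum.

Lemma ps2 p (T : {set 'I_2}) : ps (q2 p) T =
  (if ord0 \in T then val p else 0) + (if i1 \in T then 1%:M - val p else 0).
Proof.
have e0 : ps (q2 p) [set ord0] = val p.
  rewrite ps1 /q2 /ext (_ : ord0 = lift ord_max ord0) ?liftK //; exact: val_inj.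
have e1 : ps (q2 p) [set i1] = 1%:M - val p.
  rewrite ps1 /q2 /ext (_ : i1 = ord_max); last exact: val_inj.
  by rewrite unlift_none (restE (single_orth p)) /sa big_ord_recl big_ord0 addr0.
have eT := psT (ext_sum (single_orth p)).
have e0' : ps (q2 p) set0 = 0 by rewrite ps0.
case: (set2_cases T) => [->|[->|[->|->]]]; rewrite !inE /=.
- by rewrite e0' addr0.
- by rewrite e0 addr0.
- by rewrite e1 add0r.
- by rewrite eT addrC subrK.
Qed.

Lemma comp_eq (S : {set 'I_k}) : comp_hom h (ghom k S) = ctx2 (hf q S).
Proof.
apply: hom_ext => T; apply: val_inj; rewrite /= (hfE horth) (hfE (ext_orth (single_orth (hf q S)))) -[ext _]/(q2 _) ps2 (hfE horth).
case: (set2_cases T) => [->|[->|[->|->]]]; rewrite ?inE /=.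
- rewrite addr0 -(ps0 q); congr ps; rewrite /gf; apply/setP => x; rewrite !inE.
  by case: (x \in S).
- rewrite addr0; congr ps; rewrite /gf; apply/setP => x; rewrite !inE /= ?inE.
  by case: (x \in S).
- rewrite add0r -(psC hsum); congr ps; rewrite /gf; apply/setP => x; rewrite !inE /= ?inE.
  by case: (x \in S).
- rewrite addrC subrK -(psT hsum); congr ps; rewrite /gf; apply/setP => x; rewrite !inE /= ?inE.
  by case: (x \in S).
Qed.

Lemma u_ctx (S : {set 'I_k}) : u (hf q S) = U F eta k (PP H) h S.
Proof.
rewrite /u /U -comp_eq Fmap_comp ED_nat //; congr (Fmap _ (ED _ _ _ _)).
exact: ghom0 k S.
Qed.

Lemma hf1 i : hf q [set i] = q i.
Proof. by apply: val_inj; rewrite (hfE horth) ps1. Qed.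

Lemma u_cover : fle (ftop _) (fsup (fun y => exists i, y = u (q i))).
Proof.
apply: fle_trans (U_cover F eta hiso k (PP H) h) _.
apply: fsup_le => s [i ->]; apply: fsup_ub; exists i.
by rewrite -u_ctx hf1.
Qed.

Lemma u_meet i j : i != j -> fmeet (u (q i)) (u (q j)) = fbot _.
Proof.
move=> hij; rewrite -!hf1 !u_ctx U_meet // -(U0 F eta hiso k (PP H) h); congr U.
apply/setP => x; rewrite !inE; apply/negbTE; apply: contraNN hij.
by case/andP => /eqP -> /eqP ->.
Qed.
End Gen.
End U.

From mathcomp Require Import all_boot all_order all_algebra.
Set Implicit Arguments.
Unset Strict Implicit.
Unset Printing Implicit Defensive.
Import Order.TTheory GRing.Theory Num.Theory.
Local Open Scope ring_scope.

Definition ent := (int * int)%type.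
Definition ray := (ent * ent * ent)%type.
Definition rc (r : ray) (j : nat) : ent :=
  if j is 0 then r.1.1 else if j is 1 then r.1.2 else r.2.
Definition emul (e f : ent) : ent := (e.1 * f.1 + 2 * e.2 * f.2, e.1 * f.2 + e.2 * f.1).
Definition eadd (e f : ent) : ent := (e.1 + f.1, e.2 + f.2).
Definition sdot (r t : ray) : ent :=
  eadd (emul (rc r 0) (rc t 0)) (eadd (emul (rc r 1) (rc t 1)) (emul (rc r 2) (rc t 2))).
Definition ent0 : ent := (0, 0).
Definition ray0 : ray := (ent0, ent0, ent0).

Definition rays : seq ray := [::
  (((Posz 0), (Posz 0)), ((Posz 0), (Posz 0)), ((Posz 1), (Posz 0)));
  (((Posz 0), (Posz 0)), ((Posz 1), (Posz 0)), ((Posz 0), (Posz 0)));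
  (((Posz 1), (Posz 0)), ((Posz 0), (Posz 0)), ((Posz 0), (Posz 0)));
  (((Posz 0), (Posz 0)), ((Posz 1), (Posz 0)), ((Posz 1), (Posz 0)));
  (((Posz 0), (Posz 0)), ((Posz 1), (Posz 0)), ((Negz 0), (Posz 0)));
  (((Posz 1), (Posz 0)), ((Posz 0), (Posz 0)), ((Posz 1), (Posz 0)));
  (((Posz 1), (Posz 0)), ((Posz 0), (Posz 0)), ((Negz 0), (Posz 0)));
  (((Posz 1), (Posz 0)), ((Posz 1), (Posz 0)), ((Posz 0), (Posz 0)));
  (((Posz 1), (Posz 0)), ((Negz 0), (Posz 0)), ((Posz 0), (Posz 0)));
  (((Posz 0), (Posz 0)), ((Posz 1), (Posz 0)), ((Posz 0), (Posz 1)));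
  (((Posz 0), (Posz 0)), ((Posz 1), (Posz 0)), ((Posz 0), (Negz 0)));
  (((Posz 0), (Posz 0)), ((Posz 0), (Posz 1)), ((Posz 1), (Posz 0)));
  (((Posz 0), (Posz 0)), ((Posz 0), (Posz 1)), ((Negz 0), (Posz 0)));
  (((Posz 1), (Posz 0)), ((Posz 0), (Posz 0)), ((Posz 0), (Posz 1)));
  (((Posz 1), (Posz 0)), ((Posz 0), (Posz 0)), ((Posz 0), (Negz 0)));
  (((Posz 1), (Posz 0)), ((Posz 0), (Posz 1)), ((Posz 0), (Posz 0)));
  (((Posz 1), (Posz 0)), ((Posz 0), (Negz 0)), ((Posz 0), (Posz 0)));
  (((Posz 0), (Posz 1)), ((Posz 0), (Posz 0)), ((Posz 1), (Posz 0)));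
  (((Posz 0), (Posz 1)), ((Posz 0), (Posz 0)), ((Negz 0), (Posz 0)));
  (((Posz 0), (Posz 1)), ((Posz 1), (Posz 0)), ((Posz 0), (Posz 0)));
  (((Posz 0), (Posz 1)), ((Negz 0), (Posz 0)), ((Posz 0), (Posz 0)));
  (((Posz 1), (Posz 0)), ((Posz 1), (Posz 0)), ((Posz 0), (Posz 1)));
  (((Posz 1), (Posz 0)), ((Posz 1), (Posz 0)), ((Posz 0), (Negz 0)));
  (((Posz 1), (Posz 0)), ((Negz 0), (Posz 0)), ((Posz 0), (Posz 1)));
  (((Posz 1), (Posz 0)), ((Negz 0), (Posz 0)), ((Posz 0), (Negz 0)));
  (((Posz 1), (Posz 0)), ((Posz 0), (Posz 1)), ((Posz 1), (Posz 0)));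
  (((Posz 1), (Posz 0)), ((Posz 0), (Posz 1)), ((Negz 0), (Posz 0)));
  (((Posz 1), (Posz 0)), ((Posz 0), (Negz 0)), ((Posz 1), (Posz 0)));
  (((Posz 1), (Posz 0)), ((Posz 0), (Negz 0)), ((Negz 0), (Posz 0)));
  (((Posz 0), (Posz 1)), ((Posz 1), (Posz 0)), ((Posz 1), (Posz 0)));
  (((Posz 0), (Posz 1)), ((Posz 1), (Posz 0)), ((Negz 0), (Posz 0)));
  (((Posz 0), (Posz 1)), ((Negz 0), (Posz 0)), ((Posz 1), (Posz 0)));
  (((Posz 0), (Posz 1)), ((Negz 0), (Posz 0)), ((Negz 0), (Posz 0)))].
Definition triads : seq (seq nat) := [::
  [:: 0; 1; 2];
  [:: 0; 7; 8];
  [:: 0; 15; 20];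
  [:: 0; 16; 19];
  [:: 1; 5; 6];
  [:: 1; 13; 18];
  [:: 1; 14; 17];
  [:: 2; 3; 4];
  [:: 2; 9; 12];
  [:: 2; 10; 11];
  [:: 3; 30; 31];
  [:: 4; 29; 32];
  [:: 5; 26; 28];
  [:: 6; 25; 27];
  [:: 7; 23; 24];
  [:: 8; 21; 22]].

Definition rr (x : nat) : ray := nth ray0 rays x.
Definition orthb (x y : nat) : bool := sdot (rr x) (rr y) == ent0.
Definition nzb (x : nat) : bool := ((sdot (rr x) (rr x)).2 == 0) && (0 < (sdot (rr x) (rr x)).1).

Definition conflict (S : seq nat) : bool := has (fun x => has (orthb x) S) S.
Definition alive (S : seq nat) (x : nat) : bool := ~~ has (orthb x) S.
Definition pick (S : seq nat) : option (seq nat) :=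
  foldr (fun cl acc =>
    if has (fun x => x \in S) cl then acc else
    match acc with
    | None => Some cl
    | Some cl' => if (count (alive S) cl < count (alive S) cl')%N then Some cl else acc
    end) None triads.
Fixpoint chk (fuel : nat) (S : seq nat) : bool :=
  match fuel with
  | 0 => false
  | f.+1 => if conflict S then true else
      (match pick S with Some cl => all (fun x => chk f (x :: S)) cl | None => false end)
  end.

Lemma pick_in S cl : pick S = Some cl -> cl \in triads.
Proof.
rewrite /pick; elim: triads cl => [|t ts IH] cl //=.
case: has => //.
  by move/IH; rewrite inE orbC => ->.
case E: (foldr _ _ ts) => [cl'|].
  case: ifP => _ [<-] //; first by rewrite inE eqxx.
  by rewrite inE (IH _ E) orbT.
by case=> <-; rewrite inE eqxx.
Qed.

Section Sound.
Variables (L : Frame) (a : nat -> L) (c : L).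
Hypothesis hcl : forall cl, cl \in triads ->
  fle (ftop L) (fsup (fun y => y = c \/ exists2 x, x \in cl & y = a x)).
Hypothesis hor : forall x y, orthb x y -> fmeet (a x) (a y) = fbot L.

Definition mS (S : seq nat) : L := foldr (fun x acc => fmeet (a x) acc) (ftop L) S.

Lemma mS_le S x : x \in S -> fle (mS S) (a x).
Proof.
elim: S => [|y S IH] //=; rewrite inE => /orP[/eqP ->|h].
  exact: fle_meetl.
exact: fle_trans (fle_meetr _ _) (IH h).
Qed.

Lemma chk_sound f S : chk f S -> fle (mS S) c.
Proof.
elim: f S => [|f IH] S //=; case: ifP => [hc _|_].
  move: hc; case/hasP => x hx /hasP [y hy hxy].
  apply: fle_trans (fle_meet (mS_le hx) (mS_le hy)) _.
  by rewrite hor //; apply: fbot_le.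
case E: (pick S) => [cl|] // hall.
have htop : fle (mS S) (fmeet (mS S) (ftop L)) by apply: fle_meet; [apply: fle_refl|apply: ftop_max].
apply: fle_trans htop _.
apply: fle_trans (fle_meet2 (fle_refl _) (hcl (pick_in E))) _.
rewrite fdistr; apply: fsup_le => y [s hs ->].
case: hs => [->|[x hx ->]]; first exact: fle_meetr.
rewrite fmeetC; apply: (IH (x :: S)).
by move/allP: hall; apply.
Qed.
End Sound.

Lemma chk_ok : chk 20 [::].
Proof. by vm_compute. Qed.

Lemma triads_ok : all (fun t => [&& size t == 3, uniq t, all (fun x => (x < size rays)%N) t,
   all (fun x => all (fun y => (x == y) || orthb x y) t) t & all nzb t]) triads.
Proof. by vm_compute. Qed.

Lemma rays_ok : all nzb (iota 0 (size rays)).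
Proof. by vm_compute. Qed.

From mathcomp Require Import all_boot all_order all_algebra complex Rstruct.
From mathcomp Require Import ring.
Set Implicit Arguments.
Unset Strict Implicit.
Unset Printing Implicit Defensive.
Import Order.TTheory GRing.Theory Num.Theory.
Local Open Scope ring_scope.

Definition s2 : C := sqrtC 2.
Lemma s2s2 : s2 * s2 = 2.
Proof. by rewrite -expr2 sqrtCK. Qed.
Lemma s2_real : s2 \is Num.real.
Proof. by apply: ger0_real; rewrite sqrtC_ge0 ler0n. Qed.

Definition emb (e : ent) : C := e.1%:~R + e.2%:~R * s2.
Lemma emb_real e : emb e \is Num.real.
Proof. by rewrite rpredD ?rpredM ?realz ?s2_real. Qed.
Lemma emb_add e f : emb (eadd e f) = emb e + emb f.
Proof. rewrite /emb /eadd /= !intrD; ring. Qed.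
Lemma emb_mul e f : emb (emul e f) = emb e * emb f.
Proof.
rewrite /emb /emul /=.
transitivity ((e.1 * f.1)%:~R + (e.1 * f.2 + e.2 * f.1)%:~R * s2 + (e.2 * f.2)%:~R * 2 : C).
  by rewrite !intrD !intrM; ring.
rewrite -s2s2 !intrD !intrM; ring.
Qed.
Lemma emb0 : emb ent0 = 0.
Proof. by rewrite /emb /= mul0r addr0. Qed.

Definition Vr (r : ray) : 'rV[C]_3 := \row_(j < 3) emb (rc r j).

Lemma dotE r t : (Vr r *m (Vr t)^T) 0 0 = emb (sdot r t).
Proof.
rewrite !mxE !big_ord_recl big_ord0 addr0 /sdot !emb_add !emb_mul !mxE.
by [].
Qed.

Lemma mx11E (A : 'M[C]_1) : A = (A 0 0)%:M.
Proof. by apply/matrixP => i j; rewrite !ord1 mxE. Qed.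

Section Geo.
Variables (n c : nat).
Hypothesis hc : (c + 3 <= n)%N.

Definition E : 'M[C]_(3, n) := \matrix_(a < 3, j < n) ((c + a)%N == j)%:R.

Lemma EEt : E *m E^T = 1%:M.
Proof.
apply/matrixP => a b; rewrite !mxE.
have ha : (c + a < n)%N by apply: leq_trans hc; rewrite ltn_add2l.
rewrite (bigD1 (Ordinal ha)) //= big1 ?addr0.
  by rewrite !mxE eqxx mul1r eqn_add2l eq_sym.
by move=> j hj; rewrite !mxE (_ : (c + a == j)%N = false) ?mul0r //; apply: contraNF hj => /eqP h; apply/eqP/val_inj.
Qed.

Definition w (r : ray) : 'rV[C]_n := Vr r *m E.

Lemma wwt r t : w r *m (w t)^T = (emb (sdot r t))%:M.
Proof.
by rewrite /w trmx_mul mulmxA -(mulmxA (Vr r)) EEt mulmx1 [LHS]mx11E dotE.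
Qed.

Lemma w_real r j : w r 0 j \is Num.real.
Proof.
rewrite !mxE rpred_sum // => a _; rewrite !mxE rpredM ?emb_real //.
by apply: realn.
Qed.

Definition Pm (r : ray) : 'M[C]_n := (emb (sdot r r))^-1 *: ((w r)^T *m w r).

Lemma PmE r i j : Pm r i j = (emb (sdot r r))^-1 * (w r 0 i * w r 0 j).
Proof. by rewrite !mxE big_ord1 !mxE. Qed.

Lemma adjE (A : 'M[C]_n) i j : adjmx A i j = (A j i)^*.
Proof. by rewrite !mxE. Qed.

Lemma Pm_proj r : emb (sdot r r) != 0 -> is_proj (Pm r).
Proof.
move=> hd; rewrite is_projP; apply/andP; split; apply/eqP.
  apply/matrixP => i j; rewrite adjE PmE conj_Creal ?PmE ?[w r 0 j * _]mulrC //.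
  by rewrite rpredM ?rpredV ?emb_real ?rpredM ?w_real.
rewrite /Pm -scalemxAl -scalemxAr scalerA mulmxA -(mulmxA _ (w r)) wwt.
rewrite mul_mx_scalar -scalemxAl scalerA -mulrA mulVf // mulr1.
by [].
Qed.

Lemma Pm_orth r t : sdot r t = ent0 -> Pm r *m Pm t = 0.
Proof.
move=> h; rewrite /Pm -scalemxAl -scalemxAr mulmxA -(mulmxA _ (w r)) wwt h emb0.
by rewrite mul_mx_scalar scale0r mul0mx !scaler0.
Qed.

Section Triad.
Variable tri : 'I_3 -> ray.
Hypothesis ho : forall a b, a != b -> sdot (tri a) (tri b) = ent0.
Hypothesis hn : forall a, emb (sdot (tri a) (tri a)) != 0.
Let d a := emb (sdot (tri a) (tri a)).

Definition M : 'M[C]_3 := \matrix_(a < 3, j < 3) Vr (tri a) 0 j.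
Definition N : 'M[C]_3 := \matrix_(a < 3, j < 3) ((d a)^-1 * Vr (tri a) 0 j).

Lemma NMt : N *m M^T = 1%:M.
Proof.
apply/matrixP => a b.
have -> : (N *m M^T) a b = (d a)^-1 * (Vr (tri a) *m (Vr (tri b))^T) 0 0.
  rewrite !mxE mulr_sumr; apply: eq_bigr => j _; rewrite !mxE mulrA.
  by [].
rewrite dotE !mxE; case: eqP => [<-|/eqP hab]; first by rewrite mulVf ?hn.
by rewrite ho // emb0 mulr0.
Qed.

Lemma sumPm : \sum_a Pm (tri a) = E^T *m E.
Proof.
have h1 : M^T *m N = 1%:M by apply: mulmx1C; exact: NMt.
have h2 : \sum_a (d a)^-1 *: ((Vr (tri a))^T *m Vr (tri a)) = M^T *m N.
  apply/matrixP => i j; rewrite summxE !mxE; apply: eq_bigr => a _.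
  by rewrite !mxE big_ord1 !mxE mulrCA.
transitivity (E^T *m (\sum_a (d a)^-1 *: ((Vr (tri a))^T *m Vr (tri a))) *m E); last first.
  by rewrite h2 h1 mulmx1.
rewrite mulmx_sumr mulmx_suml; apply: eq_bigr => a _.
rewrite /Pm /w trmx_mul -scalemxAr -scalemxAl !mulmxA.
by [].
Qed.
End Triad.
End Geo.

From mathcomp Require Import all_boot all_order all_algebra complex Rstruct.
From mathcomp Require Import zify.
From Stdlib Require Import FunctionalExtensionality PropExtensionality ProofIrrelevance.
Unset Implicit Arguments.
Unset Strict Implicit.
Unset Printing Implicit Defensive.
Import Order.TTheory GRing.Theory Num.Theory.
Local Open Scope ring_scope.

Lemma fmeet_botl (L : Frame) (a : L) : fmeet (fbot L) a = fbot L.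
Proof. by apply: fle_anti; [apply: fle_meetl|apply: fbot_le]. Qed.
Lemma fmeet_botr (L : Frame) (a : L) : fmeet a (fbot L) = fbot L.
Proof. by apply: fle_anti; [apply: fle_meetr|apply: fbot_le]. Qed.

Lemma ord2_cases (i : 'I_2) : i = ord0 \/ i = i1.
Proof. by case: i => [[|[|m]] hm] //; [left|right]; apply: val_inj. Qed.

Lemma nz x : nzb x -> emb (sdot (rr x) (rr x)) != 0.
Proof.
case/andP => /eqP h2 h1; rewrite /emb h2 mul0r addr0 intr_eq0.
exact: lt0r_neq0.
Qed.

Section Final.
Variables (F : PBA_Loc_functor) (eta : forall A : PBA, (A -> Prop) -> @Fob F A).
Hypothesis hiso : forall A : PBA, is_boolean A -> idl_frame_iso (eta A).
Hypothesis hnat : forall (A B : PBA) (f : pba_hom A B), is_boolean A -> is_boolean B ->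
     forall I : A -> Prop, is_ideal I ->
       @Fmap F A B f (eta A I) = eta B (idl_image f I).
Variables (n : nat) (H : pba_axiom (ProjData n)).
Let L := Fob F (PP H).
Let uu := u F eta n H.

Lemma u_orth (p q : proj n) : val p *m val q = 0 -> fmeet (uu p) (uu q) = fbot L.
Proof.
move=> hpq.
have hqp : val q *m val p = 0.
  by have := congr1 (@adjmx n) hpq; rewrite hadjM hadj0 (projE p).1 (projE q).1.
pose pr := fun i : 'I_2 => if i == ord0 then p else q.
have ho : forall i j : 'I_2, i != j -> val (pr i) *m val (pr j) = 0.
  move=> i j; case: (ord2_cases i) => ->; case: (ord2_cases j) => -> //; by rewrite eqxx.
have := u_meet F eta hiso hnat n H 3 (ext pr) (ext_orth ho) (ext_sum ho)
  (lift ord_max ord0) (lift ord_max i1).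
by rewrite /ext !liftK /pr /=; apply.
Qed.

Lemma delta_proj (i : 'I_n) : is_proj (delta_mx i i : 'M[C]_n).
Proof.
rewrite is_projP mul_delta_mx eqxx andbT; apply/eqP/matrixP => a b.
by rewrite !mxE conjC_nat andbC.
Qed.
Definition qd (i : 'I_n) : proj n := insubd (proj0 n) (delta_mx i i).
Lemma qdE i : val (qd i) = delta_mx i i.
Proof. exact: val_ins (delta_proj i). Qed.
Lemma qd_orth i j : i != j -> val (qd i) *m val (qd j) = 0.
Proof. by move=> hij; rewrite !qdE mul_delta_mx_0. Qed.
Lemma qd_sum : \sum_i val (qd i) = 1%:M.
Proof. by rewrite (mx1_sum_delta C n); apply: eq_bigr => i _; rewrite qdE. Qed.

Let Ud := U F eta n (PP H) (ctx_hom H qd_orth qd_sum).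

Section SecC.
Variables (c : nat) (hc : (c + 3 <= n)%N).
Definition imc : {set 'I_n} := [set j : 'I_n | (c <= j < c + 3)%N].

Lemma EtE : (E n c)^T *m E n c = ps qd imc.
Proof.
apply/matrixP => i j; rewrite !mxE /ps summxE.
rewrite [in RHS]big_mkcond /= [in RHS](bigD1 i) //= [X in _ = _ + X]big1 ?addr0; last first.
  move=> t hti; case: (t \in imc) => //; rewrite qdE !mxE.
  by rewrite (_ : (i == t) = false) //; apply/negbTE; rewrite eq_sym.
rewrite qdE !mxE eqxx /= inE !big_ord_recl big_ord0 !mxE /=.
rewrite addr0 -!natrM -!natrD /bump /=.
case: ifP => h; [|rewrite -[RHS]/((0%N)%:R)]; congr (_ %:R); move: h; rewrite -?[j == i]/(nat_of_ord j == nat_of_ord i)%N; lia.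
Qed.

Definition Pp (r : ray) : proj n := insubd (proj0 n) (Pm n c r).
Lemma PpE x : nzb x -> val (Pp (rr x)) = Pm n c (rr x).
Proof. by move=> hx; apply: val_ins; apply: Pm_proj hc _ (nz x hx). Qed.

Lemma nzb_in x : (x < size rays)%N -> nzb x.
Proof. by move=> hx; apply: (allP rays_ok); rewrite mem_iota. Qed.

Definition at_ (x : nat) : L := if (x < size rays)%N then uu (Pp (rr x)) else fbot L.

Lemma Pp_orth x y : nzb x -> nzb y -> orthb x y -> val (Pp (rr x)) *m val (Pp (rr y)) = 0.
Proof.
move=> hx hy h. have := Pm_orth hc (eqP h). rewrite -(PpE x hx) -(PpE y hy). exact.
Qed.

Lemma at_in x : (x < size rays)%N -> at_ x = uu (Pp (rr x)).
Proof. move=> h. rewrite /at_ h. reflexivity. Qed.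
Lemma at_out x : ~~ (x < size rays)%N -> at_ x = fbot L.
Proof. move=> h. rewrite /at_ (negbTE h). reflexivity. Qed.

Lemma hor x y : orthb x y -> fmeet (at_ x) (at_ y) = fbot L.
Proof.
move=> hxy.
have [hx|hx] := boolP (x < size rays)%N; last first.
  rewrite (at_out x hx). exact: fmeet_botl.
have [hy|hy] := boolP (y < size rays)%N; last first.
  rewrite (at_out y hy). exact: fmeet_botr.
rewrite (at_in x hx) (at_in y hy).
apply: u_orth. exact: Pp_orth (nzb_in x hx) (nzb_in y hy) hxy.
Qed.

Section Tri.
Variable t : seq nat.
Hypothesis ht : t \in triads.
Let tok := allP triads_ok t ht.
Lemma t_size : size t = 3.
Proof. by case/and5P: tok => /eqP. Qed.
Lemma t_uniq : uniq t.
Proof. by case/and5P: tok. Qed.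
Lemma t_range x : x \in t -> (x < size rays)%N.
Proof. by case/and5P: tok => _ _ /allP h _ _; apply: h. Qed.
Lemma t_nzb x : x \in t -> nzb x.
Proof. by case/and5P: tok => _ _ _ _ /allP h; apply: h. Qed.
Lemma t_orth x y : x \in t -> y \in t -> x != y -> orthb x y.
Proof.
case/and5P: tok => _ _ _ /allP h _ hx hy hxy.
by have /allP /(_ y hy) := h x hx; rewrite (negbTE hxy).
Qed.

Definition tri (a : 'I_3) : ray := rr (nth 0%N t a).
Definition trif (a : 'I_3) : proj n := Pp (tri a).

Lemma tmem (a : 'I_3) : nth 0%N t a \in t.
Proof. by apply: mem_nth; rewrite t_size. Qed.

Lemma tneq (a b : 'I_3) : a != b -> nth 0%N t a != nth 0%N t b.
Proof. by move=> hab; rewrite nth_uniq ?t_size ?t_uniq. Qed.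

Lemma tri_ho a b : a != b -> sdot (tri a) (tri b) = ent0.
Proof. by move=> hab; apply/eqP; apply: t_orth; rewrite ?tmem ?tneq. Qed.
Lemma tri_hn a : emb (sdot (tri a) (tri a)) != 0.
Proof. by apply: nz; apply: t_nzb; apply: tmem. Qed.

Lemma trif_orth a b : a != b -> val (trif a) *m val (trif b) = 0.
Proof.
move=> hab. apply: Pp_orth. exact: t_nzb _ (tmem a). exact: t_nzb _ (tmem b).
apply: t_orth. exact: tmem a. exact: tmem b. exact: tneq a b hab.
Qed.

Lemma rest_eq : rest trif = hf qd (~: imc).
Proof.
apply: val_inj; rewrite (restE trif_orth) (hfE qd_orth) (psC qd_sum) -EtE.
congr (_ - _); rewrite /sa -(sumPm n c tri_ho tri_hn); apply: eq_bigr => a _.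
exact: PpE _ (t_nzb _ (tmem a)).
Qed.

Definition cc : L := uu (hf qd (~: imc)).

Lemma clause : fle (ftop L) (fsup (fun y => y = cc \/ exists2 x, x \in t & y = at_ x)).
Proof.
apply: fle_trans (u_cover F eta hiso hnat n H 4 (ext trif) (ext_orth trif_orth) (ext_sum trif_orth)) _.
apply: fsup_le => y [i ->]; apply: fsup_ub; rewrite /ext.
case: unliftP => [j _|_]; last by left; rewrite rest_eq.
right; exists (nth 0%N t j); first exact: tmem.
by rewrite at_in ?t_range ?tmem.
Qed.
End Tri.

Lemma top_cc : fle (ftop L) cc.
Proof.
have := chk_sound (a := at_) (c := cc) (fun cl h => clause cl h) hor chk_ok.
by [].
Qed.

Lemma top_Ud : fle (ftop L) (Ud (~: imc)).
Proof. by rewrite /Ud -(u_ctx F eta hnat n H n qd qd_orth qd_sum); apply: top_cc. Qed.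
End SecC.

Lemma final (hn3 : (3 <= n)%N) : fbot L = ftop L.
Proof.
have step : forall m, (m <= n)%N -> fle (ftop L) (Ud [set j : 'I_n | (m <= j)%N]).
  elim => [_|m IH hm].
    rewrite (_ : [set j : 'I_n | (0 <= j)%N] = setT); last by apply/setP => j; rewrite !inE.
    by rewrite /Ud U_T //; apply: fle_refl.
  pose c := if (m + 2 < n)%N then m else (n - 3)%N.
  have hc : (c + 3 <= n)%N by rewrite /c; case: ifP; lia.
  have hcm : (c <= m < c + 3)%N by rewrite /c; case: ifP; lia.
  apply: fle_trans (fle_meet (IH (ltnW hm)) (top_Ud c hc)) _.
  rewrite /Ud U_meet //; apply: U_le => //; apply/subsetP => j; rewrite !inE.
  by move: hcm; lia.
have := step n (leqnn n).
rewrite (_ : [set j : 'I_n | (n <= j)%N] = set0); last first.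
  by apply/setP => j; rewrite !inE; move: (ltn_ord j); lia.
rewrite /Ud U0 // => h; apply: fle_anti; [apply: fbot_le|exact: h].
Qed.
End Final.


Local Close Scope ring_scope.

Theorem mainTheorem9 (F : PBA_Loc_functor)
  (eta : forall A : PBA, (A -> Prop) -> @Fob F A) :
  (forall A : PBA, is_boolean A -> idl_frame_iso (eta A)) ->
  (forall (A B : PBA) (f : pba_hom A B), is_boolean A -> is_boolean B ->
     forall I : A -> Prop, is_ideal I ->
       @Fmap F A B f (eta A I) = eta B (idl_image f I)) ->
  forall n : nat, 3 <= n ->
  forall H : pba_axiom (ProjData n),
    trivial_locale (@Fob F {| pdata := ProjData n; pba_ax := H |}).
Proof.
move=> hiso hnat n hn H.
exact: (final F eta hiso hnat n H hn).
Qed.
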